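(* An integral domain $D$ is a $\ast$-wf-SH domain if and only if $D$ is a $\ast$-SH domain with trivial $\ast$-class group $Cl_\ast(D)=0$.
   Context: $\ast$ is a star operation on $D$ of finite character. A $\ast$-ideal is a nonzero fractional ideal $I$ with $I^\ast=I$; of finite type if $I=J^\ast$ for some nonzero finitely generated $J$. $I$ is $\ast$-invertible if $(II^{-1})^\ast=D$. $Cl_\ast(D)$ is the group of $\ast$-invertible fractional $\ast$-ideals under $(I,J)\mapsto (IJ)^\ast$ modulo the subgroup of nonzero principal fractional ideals. A $\ast$-homog ideal is a proper integral $\ast$-ideal $I$ of finite type such that $(A+B)^\ast\neq D$ for every pair $A,B$ of proper integral $\ast$-ideals of finite type containing $I$. $D$ is a $\ast$-SH domain if for every nonzero nonunit $x$, $xD$ is a $\ast$-product $(I_1\cdots I_n)^\ast$ of finitely many $\ast$-homog ideals. A $\ast$-wf-homog ideal is a $\ast$-homog ideal $I$ such that, if $I$ is $\ast$-invertible, then every $\ast$-invertible $\ast$-ideal containing $I$ is principal; a $\ast$-wf-homog element is a generator of a principal $\ast$-wf-homog ideal. $D$ is a $\ast$-wf-SH domain if every nonzero nonunit of $D$ is a finite product of $\ast$-wf-homog elements. *)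

(* Defs.v *)
From HB Require Import structures.
From mathcomp Require Import all_boot all_order all_algebra.
Set Implicit Arguments.
Unset Strict Implicit.
Unset Printing Implicit Defensive.
Import GRing.Theory.
Local Open Scope ring_scope.

(* The integral domain D is modelled by R : idomainType; its quotient field is
   K = {fraction R}, and D is identified with its image under r |-> r%:F. *)

Section StarDefs.
Variable R : idomainType.
Local Notation K := {fraction R}.
Definition emb (r : R) : K := FracField.tofrac r.

Definition kset := K -> Prop.

Definition subs (I J : kset) : Prop := forall x, I x -> J x.
Definition seteq (I J : kset) : Prop := forall x, I x <-> J x.

Definition Dset : kset := fun y => exists r : R, y = emb r.

Definition frac_ideal (I : kset) : Prop :=
  [/\ (exists x, I x /\ x != 0),
      I 0,
      (forall x y, I x -> I y -> I (x + y)),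
      (forall (r : R) x, I x -> I (emb r * x)) &
      (exists d : R, d != 0 /\ forall x, I x -> Dset (emb d * x))].

Definition pid (x : K) : kset := fun y => exists r : R, y = emb r * x.

Definition scale (x : K) (I : kset) : kset := fun y => exists z, I z /\ y = x * z.

Definition gen (s : seq K) : kset :=
  fun y => exists c : 'I_(size s) -> R, y = \sum_(i < size s) emb (c i) * s`_i.

Definition nz_fg (J : kset) : Prop :=
  exists s : seq K, has (fun x => x != 0) s /\ seteq J (gen s).

Definition prod (I J : kset) : kset :=
  fun y => exists n (a b : 'I_n -> K),
    (forall i, I (a i)) /\ (forall i, J (b i)) /\ y = \sum_(i < n) a i * b i.

Definition sum (I J : kset) : kset :=
  fun y => exists a b, I a /\ J b /\ y = a + b.

Definition finv (I : kset) : kset := fun x => forall y, I y -> Dset (x * y).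

Definition prodl (l : seq kset) : kset := foldr prod Dset l.

Definition star_operation (st : kset -> kset) : Prop :=
  (forall I J, frac_ideal I -> seteq I J -> seteq (st I) (st J)) /\
      (forall I, frac_ideal I -> frac_ideal (st I)) /\
      (forall x, x != 0 -> seteq (st (pid x)) (pid x)) /\
      (forall x I, x != 0 -> frac_ideal I -> seteq (st (scale x I)) (scale x (st I))) /\
      (forall I, frac_ideal I -> subs I (st I)) /\
      (forall I J, frac_ideal I -> frac_ideal J -> subs I J -> subs (st I) (st J)) /\
      (forall I, frac_ideal I -> seteq (st (st I)) (st I)).

Definition finite_character (st : kset -> kset) : Prop :=
  forall I, frac_ideal I ->
    seteq (st I) (fun y => exists J, nz_fg J /\ subs J I /\ st J y).

Variable st : kset -> kset.

Fixpoint allP {T : Type} (P : T -> Prop) (l : seq T) : Prop :=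
  if l is a :: l' then P a /\ allP P l' else True.


Definition star_ideal (I : kset) : Prop := frac_ideal I /\ seteq (st I) I.

Definition finite_type (I : kset) : Prop :=
  star_ideal I /\ exists J, nz_fg J /\ seteq I (st J).

Definition star_invertible (I : kset) : Prop :=
  frac_ideal I /\ seteq (st (prod I (finv I))) Dset.

Definition integral (I : kset) : Prop := subs I Dset.
Definition proper (I : kset) : Prop := ~ I 1.

Definition principal (I : kset) : Prop := exists x : K, x != 0 /\ seteq I (pid x).

(* Cl_*(D) = 0: every *-invertible fractional *-ideal lies in the subgroup of
   nonzero principal fractional ideals. *)
Definition trivial_star_class_group : Prop :=
  forall I, star_ideal I -> star_invertible I -> principal I.

Definition pifst (A : kset) : Prop :=
  proper A /\ integral A /\ finite_type A.

Definition star_homog (I : kset) : Prop :=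
  pifst I /\
  forall A B, pifst A -> pifst B -> subs I A -> subs I B ->
    ~ seteq (st (sum A B)) Dset.

Definition star_SH : Prop :=
  forall x : R, x != 0 -> x \isn't a GRing.unit ->
    exists l : seq kset, allP star_homog l /\ seteq (pid (emb x)) (st (prodl l)).

Definition star_wf_homog (I : kset) : Prop :=
  star_homog I /\
  (star_invertible I ->
     forall J, star_ideal J -> star_invertible J -> subs I J -> principal J).

Definition star_wf_homog_elt (x : R) : Prop := star_wf_homog (pid (emb x)).

Definition star_wf_SH : Prop :=
  forall x : R, x != 0 -> x \isn't a GRing.unit ->
    exists l : seq R, allP star_wf_homog_elt l /\ x = \prod_(y <- l) y.

End StarDefs.

(* Main.v *)
Require Import Defs.
From HB Require Import structures.
From mathcomp Require Import all_boot all_order all_algebra.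
Set Implicit Arguments.
Unset Strict Implicit.
Unset Printing Implicit Defensive.
Import GRing.Theory.
Local Open Scope ring_scope.
Local Open Scope quotient_scope.

Lemma frac_rep0 (R : idomainType) (k : {fraction R}) :
  exists u v : R, v != 0 /\ FracField.tofrac v * k = FracField.tofrac u.
Proof.
elim/quotW: k => x.
exists (\n_x), (\d_x); split; first exact: denom_ratioP.
rewrite /FracField.tofrac -lock.
rewrite -[_ * _]/(FracField.mul _ _).
rewrite -FracField.pi_mul.
apply/eqmodP => /=. rewrite FracField.equivfE.
rewrite /FracField.mulf.
rewrite !numden_Ratio ?mulf_neq0 ?denom_ratioP ?oner_neq0 //.
by rewrite mul1r mulr1 mulrC.
Qed.

Section Basic.
Variable R : idomainType.
Local Notation K := {fraction R}.
Local Notation emb := (@emb R).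
Local Notation Dset := (@Dset R).

Lemma embD a b : emb (a + b) = emb a + emb b. Proof. exact: rmorphD. Qed.
Lemma embM a b : emb (a * b) = emb a * emb b. Proof. exact: rmorphM. Qed.
Lemma emb1 : emb 1 = 1. Proof. exact: rmorph1. Qed.
Lemma emb0 : emb 0 = 0. Proof. exact: rmorph0. Qed.
Lemma emb_eq0 a : (emb a == 0) = (a == 0). Proof. exact: tofrac_eq0. Qed.
Lemma emb_inj : injective emb.
Proof. by move=> a b /eqP; rewrite /Defs.emb tofrac_eq => /eqP. Qed.
Lemma emb_prod (l : seq R) : emb (\prod_(y <- l) y) = \prod_(y <- l) emb y.
Proof. exact: rmorph_prod. Qed.

Lemma frac_rep (k : K) : exists u v : R, v != 0 /\ emb v * k = emb u.
Proof. exact: frac_rep0. Qed.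

Lemma D_emb r : Dset (emb r). Proof. by exists r. Qed.
Lemma D_add a b : Dset a -> Dset b -> Dset (a + b).
Proof. by move=> [r ->] [s ->]; exists (r + s); rewrite embD. Qed.
Lemma D_mul a b : Dset a -> Dset b -> Dset (a * b).
Proof. by move=> [r ->] [s ->]; exists (r * s); rewrite embM. Qed.
Lemma D_0 : Dset 0. Proof. by exists 0; rewrite emb0. Qed.
Lemma D_1 : Dset 1. Proof. by exists 1; rewrite emb1. Qed.
Lemma D_sum n (F : 'I_n -> K) : (forall i, Dset (F i)) -> Dset (\sum_(i < n) F i).
Proof. move=> H; apply: big_ind => //; [exact: D_0| exact: D_add]. Qed.

Lemma seteq_refl (I : kset R) : seteq I I. Proof. by []. Qed.
Lemma seteq_sym (I J : kset R) : seteq I J -> seteq J I.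
Proof. by move=> H x; split => /H. Qed.
Lemma seteq_trans (I J L : kset R) : seteq I J -> seteq J L -> seteq I L.
Proof. by move=> H1 H2 x; split => [/H1/H2|/H2/H1]. Qed.
Lemma seteq_subs (I J : kset R) : seteq I J -> subs I J.
Proof. by move=> H x /H. Qed.
Lemma subs_antisym (I J : kset R) : subs I J -> subs J I -> seteq I J.
Proof. by move=> H1 H2 x; split => [/H1|/H2]. Qed.

Lemma prod_mem (I J : kset R) a b : I a -> J b -> prod I J (a * b).
Proof.
move=> Ha Hb; exists 1%N, (fun _ => a), (fun _ => b); do 2 split => //.
by rewrite big_ord1.
Qed.

Lemma prod_0 (I J : kset R) : prod I J 0.
Proof.
exists 0%N, (fun _ => 0), (fun _ => 0); split; first by case.
by split; [case | rewrite big_ord0].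
Qed.

Lemma prod_add (I J : kset R) u v : prod I J u -> prod I J v -> prod I J (u + v).
Proof.
move=> [n [a [b [Ha [Hb ->]]]]] [m [a' [b' [Ha' [Hb' ->]]]]].
exists (n + m)%N, (fun i => match split i with inl j => a j | inr j => a' j end),
  (fun i => match split i with inl j => b j | inr j => b' j end).
split; first by move=> i; case: (split i).
split; first by move=> i; case: (split i).
rewrite big_split_ord /=; congr (_ + _); apply: eq_bigr => i _.
  by have /= -> := unsplitK (inl _ i : 'I_n + 'I_m).
by have /= -> := unsplitK (inr _ i : 'I_n + 'I_m).
Qed.

Lemma prod_min (I J S : kset R) : S 0 -> (forall u v, S u -> S v -> S (u + v)) ->
  (forall a b, I a -> J b -> S (a * b)) -> subs (prod I J) S.
Proof.
move=> S0 SD SM y [n [a [b [Ha [Hb ->]]]]].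
apply: big_ind => //; by move=> i _; apply: SM.
Qed.

Lemma prod_mono (I J I' J' : kset R) : subs I I' -> subs J J' -> subs (prod I J) (prod I' J').
Proof.
move=> H1 H2; apply: prod_min; [exact: prod_0 | exact: prod_add |].
by move=> a b /H1 Ha /H2 Hb; apply: prod_mem.
Qed.

Lemma prod_seteq (I J I' J' : kset R) : seteq I I' -> seteq J J' -> seteq (prod I J) (prod I' J').
Proof.
move=> H1 H2; apply: subs_antisym; apply: prod_mono; apply: seteq_subs => //;
  exact: seteq_sym.
Qed.

Lemma prod_comm (I J : kset R) : seteq (prod I J) (prod J I).
Proof.
have H : forall I J : kset R, subs (prod I J) (prod J I).
  move=> I0 J0; apply: prod_min; [exact: prod_0 | exact: prod_add |].
  by move=> a b Ha Hb; rewrite mulrC; apply: prod_mem.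
by apply: subs_antisym; apply: H.
Qed.

Lemma prod_assoc (I J L : kset R) : seteq (prod I (prod J L)) (prod (prod I J) L).
Proof.
apply: subs_antisym.
  apply: prod_min; [exact: prod_0 | exact: prod_add |].
  move=> a w Ha [n [b [c [Hb [Hc ->]]]]].
  exists n, (fun i => a * b i), c; split; first by move=> i; apply: prod_mem.
  by split => //; rewrite mulr_sumr; apply: eq_bigr => i _; rewrite mulrA.
apply: prod_min; [exact: prod_0 | exact: prod_add |].
move=> u c [n [a [b [Ha [Hb ->]]]]] Hc.
exists n, a, (fun i => b i * c); split => //; split; first by move=> i; apply: prod_mem.
by rewrite mulr_suml; apply: eq_bigr => i _; rewrite mulrA.
Qed.

Lemma prod_scale_r (I J : kset R) c : seteq (prod I (scale c J)) (scale c (prod I J)).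
Proof.
apply: subs_antisym.
  apply: prod_min.
  - by exists 0; split; [exact: prod_0 | rewrite mulr0].
  - move=> u v [p [Hp ->]] [q [Hq ->]]; exists (p + q); split; last by rewrite mulrDr.
    exact: prod_add.
  - move=> a b Ha [z [Hz ->]]; exists (a * z); split; first exact: prod_mem.
    by rewrite mulrCA.
move=> y [z [[n [a [b [Ha [Hb ->]]]]] ->]].
exists n, a, (fun i => c * b i); split => //; split.
  by move=> i; exists (b i).
by rewrite mulr_sumr; apply: eq_bigr => i _; rewrite mulrCA.
Qed.

Lemma prod_scale_l (I J : kset R) c : seteq (prod (scale c I) J) (scale c (prod I J)).
Proof.
apply: seteq_trans; first exact: prod_comm.
apply: seteq_trans; first exact: prod_scale_r.
by move=> y; split => -[z [Hz ->]]; exists z; split => //; apply/prod_comm.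
Qed.

Lemma pid_emb1 : seteq Dset (pid (1 : K)).
Proof. by move=> y; split => -[r ->]; exists r; rewrite ?mulr1. Qed.

Lemma prod_pid (a b : K) : seteq (prod (pid a) (pid b)) (pid (a * b)).
Proof.
apply: subs_antisym.
  apply: prod_min.
  - by exists 0; rewrite emb0 mul0r.
  - by move=> u v [r ->] [s ->]; exists (r + s); rewrite embD mulrDl.
  - move=> u v [r ->] [s ->]; exists (r * s); rewrite embM.
    by rewrite mulrACA.
move=> y [r ->]; rewrite mulrA; apply: prod_mem; first by exists r.
by exists 1; rewrite emb1 mul1r.
Qed.

Lemma scale_seteq c (I J : kset R) : seteq I J -> seteq (scale c I) (scale c J).
Proof. by move=> H y; split => -[z [/H Hz ->]]; exists z. Qed.

Lemma scale_scale c d (I : kset R) : seteq (scale c (scale d I)) (scale (c * d) I).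
Proof.
move=> y; split.
  by move=> [z [[w [Hw ->]] ->]]; exists w; rewrite mulrA.
by move=> [w [Hw ->]]; exists (d * w); split; [exists w | rewrite mulrA].
Qed.

Lemma scale1 (I : kset R) : seteq (scale 1 I) I.
Proof. by move=> y; split => [[z [Hz ->]]|Hy]; [rewrite mul1r | exists y; rewrite mul1r]. Qed.

Lemma scaleK c (I : kset R) : c != 0 -> seteq (scale c^-1 (scale c I)) I.
Proof.
move=> c0; apply: seteq_trans; first exact: scale_scale.
by rewrite mulVf //; exact: scale1.
Qed.

Lemma scale_pid (c x : K) : seteq (scale c (pid x)) (pid (c * x)).
Proof.
move=> y; split; first by move=> [z [[r ->] ->]]; exists r; rewrite mulrCA.
by move=> [r ->]; exists (emb r * x); split; [exists r | rewrite mulrCA].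
Qed.


Lemma frac_seteq (I J : kset R) : frac_ideal I -> seteq I J -> frac_ideal J.
Proof.
move=> [[x [Hx x0]] H0 HD HM [d [d0 Hd]]] H.
split.
- by exists x; split => //; apply/H.
- exact/H.
- by move=> x1 y1 /H Hx1 /H Hy1; apply/H; apply: HD.
- by move=> r x1 /H Hx1; apply/H; apply: HM.
- by exists d; split => // x1 /H; apply: Hd.
Qed.

Lemma frac_pid (x : K) : x != 0 -> frac_ideal (pid x).
Proof.
move=> x0; split.
- by exists x; split => //; exists 1; rewrite emb1 mul1r.
- by exists 0; rewrite emb0 mul0r.
- by move=> a b [r ->] [s ->]; exists (r + s); rewrite embD mulrDl.
- by move=> r a [s ->]; exists (r * s); rewrite embM mulrA.
- have [u [v [v0 Hv]]] := frac_rep x.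
  exists v; split => // a [r ->]; rewrite mulrCA Hv; exact/D_mul/D_emb/D_emb.
Qed.

Lemma frac_D : frac_ideal Dset.
Proof. apply: frac_seteq (frac_pid (oner_neq0 K)) _; exact/seteq_sym/pid_emb1. Qed.

Lemma frac_scale (c : K) (I : kset R) : c != 0 -> frac_ideal I -> frac_ideal (scale c I).
Proof.
move=> c0 [[x [Hx x0]] H0 HD HM [d [d0 Hd]]].
split.
- by exists (c * x); split; [exists x | rewrite mulf_neq0].
- by exists 0; rewrite mulr0.
- by move=> a b [z [Hz ->]] [w [Hw ->]]; exists (z + w); split; [apply: HD | rewrite mulrDr].
- by move=> r a [z [Hz ->]]; exists (emb r * z); split; [apply: HM | rewrite mulrCA].
- have [u [v [v0 Hv]]] := frac_rep c.
  exists (v * d); split; first by rewrite mulf_neq0.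
  move=> a [z [Hz ->]]; rewrite embM mulrACA Hv.
  by apply: D_mul; [apply: D_emb | apply: Hd].
Qed.

Lemma frac_finv (I : kset R) : frac_ideal I -> frac_ideal (Defs.finv I).
Proof.
move=> [[x [Hx x0]] H0 HD HM [d [d0 Hd]]].
split.
- by exists (emb d); split; [exact: Hd | rewrite emb_eq0].
- by move=> y _; rewrite /= mul0r; exact: D_0.
- by move=> a b Ha Hb y Hy; rewrite /= mulrDl; apply: D_add; [apply: Ha | apply: Hb].
- by move=> r a Ha y Hy; rewrite /= -mulrA; apply: D_mul; [apply: D_emb | apply: Ha].
- have [u [v [v0 Hv]]] := frac_rep x.
  have u0 : u != 0.
    by rewrite -emb_eq0 -Hv mulf_neq0 // emb_eq0.
  exists u; split => // a Ha; rewrite -Hv -mulrA [x * a]mulrC.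
  by apply: D_mul; [apply: D_emb | apply: Ha].
Qed.

Lemma frac_prod (I J : kset R) : frac_ideal I -> frac_ideal J -> frac_ideal (prod I J).
Proof.
move=> [[x [Hx x0]] H0 HD HM [d [d0 Hd]]] [[x' [Hx' x0']] H0' HD' HM' [d' [d0' Hd']]].
split.
- by exists (x * x'); split; [apply: prod_mem | rewrite mulf_neq0].
- exact: prod_0.
- exact: prod_add.
- move=> r a; apply: (prod_min (S := fun y => prod I J (emb r * y))).
  + by rewrite mulr0; exact: prod_0.
  + by move=> u v Hu Hv; rewrite mulrDr; apply: prod_add.
  + by move=> a1 b1 Ha Hb; rewrite mulrA; apply: prod_mem => //; apply: HM.
- exists (d * d'); split; first by rewrite mulf_neq0.
  apply: (prod_min (S := fun y => Dset (emb (d * d') * y))).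
  + by rewrite mulr0; exact: D_0.
  + by move=> u v Hu Hv; rewrite mulrDr; apply: D_add.
  + move=> a1 b1 Ha Hb; rewrite embM mulrACA.
    by apply: D_mul; [apply: Hd | apply: Hd'].
Qed.

Lemma frac_prodl (l : seq (kset R)) : Defs.allP (@frac_ideal R) l -> frac_ideal (prodl l).
Proof.
elim: l => [_|J l IH [HJ Hl]] /=; first exact: frac_D.
exact: frac_prod HJ (IH Hl).
Qed.

Lemma prod_finv_int (I : kset R) : subs (prod I (Defs.finv I)) Dset.
Proof.
apply: prod_min; [exact: D_0 | exact: D_add |].
by move=> a b Ha Hb; rewrite mulrC; apply: Hb.
Qed.

Lemma frac_closed_mul (I : kset R) r y : frac_ideal I -> I y -> I (emb r * y).
Proof. by move=> [_ _ _ HM _]; apply: HM. Qed.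

Lemma prod_D_l (I : kset R) : frac_ideal I -> seteq (prod Dset I) I.
Proof.
move=> [_ H0 HD HM _]; apply: subs_antisym.
  apply: prod_min => //; by move=> a b [r ->] Hb; apply: HM.
by move=> y Hy; rewrite -[y]mul1r; apply: prod_mem => //; exact: D_1.
Qed.

Section Star.
Variable st : kset R -> kset R.
Hypothesis Hst : star_operation st.

Lemma st_cong (I J : kset R) : frac_ideal I -> seteq I J -> seteq (st I) (st J).
Proof. by case: Hst => H _; apply: H. Qed.
Lemma st_frac (I : kset R) : frac_ideal I -> frac_ideal (st I).
Proof. by case: Hst => _ [H _]; apply: H. Qed.
Lemma st_pid (x : K) : x != 0 -> seteq (st (pid x)) (pid x).
Proof. by case: Hst => _ [_ [H _]]; apply: H. Qed.
Lemma st_scale (x : K) I : x != 0 -> frac_ideal I -> seteq (st (scale x I)) (scale x (st I)).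
Proof. by case: Hst => _ [_ [_ [H _]]]; apply: H. Qed.
Lemma st_ext (I : kset R) : frac_ideal I -> subs I (st I).
Proof. by case: Hst => _ [_ [_ [_ [H _]]]]; apply: H. Qed.
Lemma st_mono (I J : kset R) : frac_ideal I -> frac_ideal J -> subs I J -> subs (st I) (st J).
Proof. by case: Hst => _ [_ [_ [_ [_ [H _]]]]]; apply: H. Qed.

Lemma st_D : seteq (st Dset) Dset.
Proof.
apply: (seteq_trans (st_cong frac_D pid_emb1)).
apply: (seteq_trans (st_pid (oner_neq0 K))).
exact/seteq_sym/pid_emb1.
Qed.

Lemma inv_of_prod (I Q : kset R) (x : K) : frac_ideal I -> frac_ideal Q -> x != 0 ->
  seteq (st (prod I Q)) (pid x) -> star_invertible st I.
Proof.
move=> fI fQ x0 H; split => //.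
have fIQ := frac_prod fI fQ.
have fF : frac_ideal (scale x^-1 Q) by apply: frac_scale; rewrite ?invr_eq0.
have fIi := frac_prod fI (frac_finv fI).
have fIF := frac_prod fI fF.
apply: subs_antisym.
  move=> y Hy; apply/st_D.
  by apply: st_mono Hy; [| exact: frac_D | exact: prod_finv_int].
have sub1 : subs (scale x^-1 Q) (Defs.finv I).
  move=> y [q [Hq ->]] z Hz.
  have /H [r Hr] : st (prod I Q) (z * q) by apply: st_ext => //; apply: prod_mem.
  by exists r; rewrite /= -mulrA [q * z]mulrC Hr mulrCA mulVf // mulr1.
have sub2 : subs (st (prod I (scale x^-1 Q))) (st (prod I (Defs.finv I))).
  apply: st_mono => //; apply: prod_mono => //.
move=> y [r ->]; apply: sub2.
apply/(st_cong fIF (@prod_scale_r I Q x^-1)).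
apply/(st_scale (invr_neq0 x0) fIQ).
exists (emb r * x); split; first by apply/H; exists r.
by rewrite mulrCA mulVf // mulr1.
Qed.

Lemma prod_swap (A J M : kset R) : seteq (prod J (prod A M)) (prod A (prod J M)).
Proof.
apply: seteq_trans; first exact: prod_assoc.
apply: seteq_trans; first by apply: prod_seteq; [exact: prod_comm | exact: seteq_refl].
exact/seteq_sym/prod_assoc.
Qed.

Lemma allinv (l : seq (kset R)) : forall (A : kset R) (x : K), x != 0 -> frac_ideal A ->
  Defs.allP (@frac_ideal R) l -> seteq (st (prod A (prodl l))) (pid x) ->
  Defs.allP (star_invertible st) l.
Proof.
elim: l => [//|J L IH] A x x0 fA /= [fJ fL] H.
have fM := frac_prodl fL.
split.
  apply: (inv_of_prod (Q := prod A (prodl L)) fJ (frac_prod fA fM) x0).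
  apply: seteq_trans H; apply: seteq_sym; apply: st_cong.
    exact/frac_prod/frac_prod.
  exact: prod_swap.
apply: (IH (prod A J) x x0 (frac_prod fA fJ) fL).
apply: seteq_trans H; apply: seteq_sym; apply: st_cong.
  exact/frac_prod/frac_prod.
exact: prod_assoc.
Qed.


Lemma prodl_pid (l : seq R) :
  seteq (prodl (map (fun y => pid (emb y)) l)) (pid (emb (\prod_(y <- l) y))).
Proof.
elim: l => [|y l IH] /=; first by rewrite big_nil emb1; exact: pid_emb1.
apply: seteq_trans; first exact: (prod_seteq (seteq_refl _) IH).
by rewrite big_cons embM; exact: prod_pid.
Qed.

Lemma finv_pid (x : K) : x != 0 -> seteq (Defs.finv (pid x)) (pid x^-1).
Proof.
move=> x0 y; split.
  move=> Hy; have [s Hs] : Dset (y * x) by apply: Hy; exists 1; rewrite emb1 mul1r.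
  by exists s; rewrite -Hs mulfK.
move=> [s ->] z [r ->]; rewrite /= mulrACA mulVf // mulr1.
by apply: D_mul; apply: D_emb.
Qed.

Lemma pid_inv (x : K) : x != 0 -> star_invertible st (pid x).
Proof.
move=> x0; have fx := frac_pid x0; split => //.
have fP := frac_prod fx (frac_finv fx).
apply: (seteq_trans (st_cong fP (prod_seteq (seteq_refl _) (finv_pid x0)))).
have fP2 : frac_ideal (prod (pid x) (pid x^-1)) by apply: frac_prod => //; apply: frac_pid; rewrite invr_eq0.
apply: (seteq_trans (st_cong fP2 (prod_pid x x^-1))).
rewrite mulfV //.
apply: (seteq_trans (st_pid (oner_neq0 K))).
exact/seteq_sym/pid_emb1.
Qed.

Lemma pifst_seteq (I J : kset R) : seteq I J -> pifst st I -> pifst st J.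
Proof.
move=> H [Hp [Hi [[fI sI] [J0 [HJ0 HI0]]]]].
have fJ := frac_seteq fI H.
split; first by move=> /H.
split; first by move=> y /H /Hi.
split.
  split => //.
  apply: seteq_trans (seteq_trans sI H).
  exact/seteq_sym/st_cong.
exists J0; split => //.
exact: seteq_trans (seteq_sym H) HI0.
Qed.

Lemma homog_seteq (I J : kset R) : seteq I J -> star_homog st I -> star_homog st J.
Proof.
move=> H [HI Hh]; split; first exact: pifst_seteq HI.
move=> A B HA HB sA sB; apply: Hh => // y /H; [exact: sA | exact: sB].
Qed.

Lemma homog_frac (I : kset R) : star_homog st I -> frac_ideal I.
Proof. by move=> [[_ [_ [[fI _] _]]] _]. Qed.

Lemma star_ideal_scale (c : K) (I : kset R) : c != 0 -> star_ideal st I -> star_ideal st (scale c I).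
Proof.
move=> c0 [fI sI]; split; first exact: frac_scale.
apply: seteq_trans (st_scale c0 fI) _; exact: scale_seteq.
Qed.

Lemma finv_scale (c : K) (I : kset R) : c != 0 ->
  seteq (Defs.finv (scale c I)) (scale c^-1 (Defs.finv I)).
Proof.
move=> c0 y; split.
  move=> Hy; exists (y * c); split; last by rewrite mulrC mulfK.
  move=> z Hz; rewrite /= -mulrA; apply: Hy; by exists z.
move=> [f [Hf ->]] w [z [Hz ->]]; rewrite /= mulrACA mulVf // mul1r.
exact: Hf.
Qed.

Lemma star_inv_scale (c : K) (I : kset R) : c != 0 -> star_invertible st I ->
  star_invertible st (scale c I).
Proof.
move=> c0 [fI Hi]; have fcI := frac_scale c0 fI; split => //.
have fP := frac_prod fcI (frac_finv fcI).
apply: (seteq_trans _ Hi).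
apply: st_cong => //.
apply: seteq_trans; first by apply: prod_seteq; [exact: seteq_refl | exact: finv_scale c0].
apply: seteq_trans; first exact: prod_scale_l.
apply: seteq_trans; first by apply: scale_seteq; exact: prod_scale_r.
apply: seteq_trans; first exact: scale_scale.
rewrite mulfV //; exact: scale1.
Qed.

Lemma principal_unscale (c : K) (I : kset R) : c != 0 -> principal (scale c I) -> principal I.
Proof.
move=> c0 [w [w0 Hw]]; exists (c^-1 * w); split; first by rewrite mulf_neq0 ?invr_eq0.
apply: seteq_trans (seteq_sym (scaleK _ c0)) _.
apply: seteq_trans (scale_seteq _ Hw) _.
exact: scale_pid.
Qed.

Lemma field_D : (forall c : R, c != 0 -> c \is a GRing.unit) -> forall k : K, Dset k.
Proof.
move=> H k; have [u [v [v0 Hv]]] := frac_rep k.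
exists (v^-1 * u); rewrite embM /Defs.emb rmorphV ?H //.
by rewrite -[FracField.tofrac u]Hv mulKf // tofrac_eq0.
Qed.

Lemma pid_unit (r y : R) : r \is a GRing.unit -> seteq (pid (emb (r * y))) (pid (emb y)).
Proof.
move=> ru z; split.
  by move=> [s ->]; exists (s * r); rewrite embM !mulrA embM.
move=> [s ->]; exists (s * r^-1); rewrite -!embM; congr (emb _).
by rewrite mulrA mulrVK.
Qed.

End Star.
End Basic.

From Stdlib Require Import Classical.
Unset Implicit Arguments.
Local Close Scope quotient_scope.

Theorem mainTheorem17 (R : idomainType) (st : kset R -> kset R) :
  star_operation st -> finite_character st ->
  (star_wf_SH st <-> star_SH st /\ trivial_star_class_group st).
Proof.
move=> Hst _.
have Cl0 : star_wf_SH st -> trivial_star_class_group st.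
  move=> Hwf I [fI stI] Iinv.
  have fI' := fI.
  case: fI' => [[x [Hx x0]] _ _ HM [d [d0 Hd]]].
  have [a Ha] := Hd x Hx.
  have Ia : I (emb a) by rewrite -Ha; apply: HM.
  have a0 : a != 0 by rewrite -emb_eq0 -Ha mulf_neq0 // emb_eq0.
  case: (classic (exists c : R, c != 0 /\ c \isn't a GRing.unit)) => [[c [c0 cu]]|Hno].
    set b := a * c.
    have b0 : b != 0 by rewrite mulf_neq0.
    have bu : b \isn't a GRing.unit by rewrite unitrM negb_and cu orbT.
    have Ib : I (emb b) by rewrite /b embM mulrC; apply: HM.
    have [l [Hl Hb]] := Hwf b b0 bu.
    case: l Hl Hb => [|y L] /=.
      by rewrite big_nil => _ Hb1; move: bu; rewrite Hb1 unitr1.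
    move=> [[Hy wfc] HL]; rewrite big_cons => Hb.
    set p := \prod_(j <- L) j in Hb.
    have p0 : p != 0 by apply: contraNneq b0; rewrite Hb => ->; rewrite mulr0.
    have y0 : y != 0 by apply: contraNneq b0; rewrite Hb => ->; rewrite mul0r.
    have ep0 : emb p != 0 by rewrite emb_eq0.
    have ey0 : emb y != 0 by rewrite emb_eq0.
    apply: (principal_unscale (invr_neq0 ep0)).
    apply: (wfc (pid_inv Hst ey0)).
    - exact: star_ideal_scale (invr_neq0 ep0) _.
    - exact: star_inv_scale (invr_neq0 ep0) _.
    - move=> z [r ->]; exists (emb r * emb b); split; first exact: HM.
      by rewrite Hb embM [emb y * emb p]mulrC mulrCA mulKf.
  have Hall : forall c : R, c != 0 -> c \is a GRing.unit.
    move=> c c0; apply: NNPP => cu; apply: Hno; exists c; split => //.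
    by apply/negP.
  exists 1; split; first exact: oner_neq0.
  move=> y; split.
    by move=> _; have [r ->] := field_D Hall y; exists r; rewrite mulr1.
  move=> _; have [r Hr] := field_D Hall (y * x^-1).
  have -> : y = emb r * x by rewrite -Hr mulfVK.
  exact: HM.
split.
  move=> Hwf; split; last exact: Cl0.
  move=> x x0 xu; have [l [Hl Hx]] := Hwf x x0 xu.
  exists (map (fun y => pid (emb y)) l); split.
    elim: l Hl {Hx} => [//|y l IH] /= [[Hy _] Hl]; split => //; exact: IH.
  have ex0 : emb x != 0 by rewrite emb_eq0.
  apply: seteq_trans (seteq_sym (st_pid Hst ex0)) _.
  apply: st_cong => //; first exact: frac_pid.
  rewrite Hx; exact/seteq_sym/prodl_pid.
move=> [HSH HCl] x x0 xu.
have [l [Hl Hx]] := HSH x x0 xu.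
have ex0 : emb x != 0 by rewrite emb_eq0.
have fl : Defs.allP (@frac_ideal R) l.
  elim: l Hl {Hx} => [//|J l IH] /= [HJ Hl]; split; [exact: homog_frac HJ | exact: IH].
have fP := frac_prodl fl.
have il : Defs.allP (star_invertible st) l.
  have H1 : seteq (st (prod (@Defs.Dset R) (prodl l))) (pid (emb x)).
    apply: (seteq_trans _ (seteq_sym Hx)).
    apply: st_cong => //; [exact: frac_prod (@frac_D R) fP | exact: prod_D_l].
  exact: (allinv Hst ex0 (@frac_D R) fl H1).
have [l' [Hl' Hp]] : exists l' : seq R,
    Defs.allP (fun y => star_homog st (pid (emb y))) l' /\
    seteq (prodl l) (pid (emb (\prod_(y <- l') y))).
  elim: l Hl il {Hx fl fP} => [|J l IH] /= .
    by move=> _ _; exists [::]; split => //; rewrite big_nil emb1; exact: (@pid_emb1 R).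
  move=> [HJ Hl] [iJ il].
  have [l' [Hl' Hp]] := IH Hl il.
  have [w [w0 Hw]] := HCl J (let: conj (conj _ (conj _ (conj sJ _))) _ := HJ in sJ) iJ.
  have [[_ [intJ _]] _] := HJ.
  have [y Hy] : Dset w by apply: intJ; apply/Hw; exists 1; rewrite emb1 mul1r.
  rewrite Hy in Hw.
  exists (y :: l'); split; first by split => //; exact: homog_seteq Hw HJ.
  rewrite big_cons embM.
  apply: seteq_trans (prod_seteq Hw Hp) _; exact: prod_pid.
set p := \prod_(y <- l') y in Hp.
have Hxp : seteq (pid (emb x)) (pid (emb p)).
  apply: seteq_trans Hx _.
  apply: seteq_trans (st_cong Hst fP Hp) _.
  apply: (st_pid Hst); apply/negP => /eqP p0.
  case: fP => [[z [/Hp [r Hz] z0]] _ _ _ _].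
  by move: z0; rewrite Hz p0 mulr0 eqxx.
have [r Hr] : exists r, x = r * p.
  have [r Hr] : pid (emb p) (emb x) by apply/Hxp; exists 1; rewrite emb1 mul1r.
  by exists r; apply: emb_inj; rewrite embM.
have [s Hs] : exists s, p = s * x.
  have [s Hs] : pid (emb x) (emb p) by apply/Hxp; exists 1; rewrite emb1 mul1r.
  by exists s; apply: emb_inj; rewrite embM.
have rs : r * s = 1.
  apply: (mulIf x0); rewrite mul1r -mulrA -Hs -Hr //.
have ru : r \is a GRing.unit by apply/unitrPr; exists s.
have wfok : forall y, star_homog st (pid (emb y)) -> star_wf_homog_elt st y.
  by move=> y Hy; split => // _ J HJ HJi _; exact: HCl J HJ HJi.
move: Hr; rewrite /p; case: l' Hl' {Hp Hs p Hxp} => [|y L] /=.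
  by move=> _; rewrite big_nil mulr1 => Hr; move: xu; rewrite Hr ru.
move=> [Hy HL] Hr; exists (r * y :: L); split; last first.
  by rewrite Hr !big_cons mulrA.
rewrite /=; split.
  by apply: wfok; apply: (homog_seteq Hst _ Hy); apply: seteq_sym; exact: (pid_unit y ru).
elim: L HL {Hr} => [//|z L IH] /= [Hz HL]; split; [exact: wfok | exact: IH].
Qed.
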